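(* There is a 2-functor $\mathrm{Imp}\colon \mathrm{W2G}\to\mathrm{C2G}$ which sends each weak 2-group $C$ to a coherent 2-group $\mathrm{Imp}(C)$ having the same underlying weak monoidal category as $C$ (equipped with a choice of adjoint equivalence for each object), and which acts as the identity on morphisms and 2-morphisms.
   Context: A weak 2-group is a weak monoidal category in which all morphisms are invertible and every object $x$ has a weak inverse $y$ ($x\otimes y\cong 1\cong y\otimes x$). A coherent 2-group is a weak monoidal category in which all morphisms are invertible and each object $x$ is equipped with an adjoint equivalence $(x,\bar x,i_x,e_x)$: isomorphisms $i_x\colon 1\to x\otimes\bar x$, $e_x\colon\bar x\otimes x\to 1$ satisfying the two zig-zag identities ($r_x^{-1}\ell_x=(1\otimes e_x)a_{x,\bar x,x}(i_x\otimes 1)$ and $\ell_{\bar x}^{-1}r_{\bar x}=(e_x\otimes 1)a^{-1}_{\bar x,x,\bar x}(1\otimes i_x)$). $\mathrm{W2G}$ (resp. $\mathrm{C2G}$) is the strict 2-category whose objects are weak (resp. coherent) 2-groups, whose morphisms are weak monoidal functors (for coherent 2-groups no compatibility with the chosen adjoint equivalences is required), and whose 2-morphisms are monoidal natural transformations. *)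

(* Defs.v *)
(* Composition is written applicatively:
   [comp g f] is "g after f" (the paper's "g f"). *)

Record MonCat := {
  ob : Type;
  hom : ob -> ob -> Type;
  idm : forall x, hom x x;
  comp : forall x y z, hom y z -> hom x y -> hom x z;
  comp_id_l : forall x y (f : hom x y), comp _ _ _ (idm y) f = f;
  comp_id_r : forall x y (f : hom x y), comp _ _ _ f (idm x) = f;
  comp_assoc : forall w x y z (h : hom y z) (g : hom x y) (f : hom w x),
      comp _ _ _ h (comp _ _ _ g f) = comp _ _ _ (comp _ _ _ h g) f;
  tens : ob -> ob -> ob;
  tensm : forall x x' y y', hom x x' -> hom y y' -> hom (tens x y) (tens x' y');
  tens_id : forall x y, tensm _ _ _ _ (idm x) (idm y) = idm (tens x y);
  tens_comp : forall x x' x'' y y' y'' (f : hom x x') (f' : hom x' x'')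
      (g : hom y y') (g' : hom y' y''),
      tensm _ _ _ _ (comp _ _ _ f' f) (comp _ _ _ g' g)
      = comp _ _ _ (tensm _ _ _ _ f' g') (tensm _ _ _ _ f g);
  unit : ob;
  assoc : forall x y z, hom (tens (tens x y) z) (tens x (tens y z));
  lunit : forall x, hom (tens unit x) x;
  runit : forall x, hom (tens x unit) x;
  assoc_iso : forall x y z, exists g, comp _ _ _ g (assoc x y z) = idm _
                                 /\ comp _ _ _ (assoc x y z) g = idm _;
  lunit_iso : forall x, exists g, comp _ _ _ g (lunit x) = idm _
                             /\ comp _ _ _ (lunit x) g = idm _;
  runit_iso : forall x, exists g, comp _ _ _ g (runit x) = idm _
                             /\ comp _ _ _ (runit x) g = idm _;
  assoc_nat : forall x x' y y' z z' (f : hom x x') (g : hom y y') (h : hom z z'),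
      comp _ _ _ (assoc x' y' z') (tensm _ _ _ _ (tensm _ _ _ _ f g) h)
      = comp _ _ _ (tensm _ _ _ _ f (tensm _ _ _ _ g h)) (assoc x y z);
  lunit_nat : forall x x' (f : hom x x'),
      comp _ _ _ (lunit x') (tensm _ _ _ _ (idm unit) f) = comp _ _ _ f (lunit x);
  runit_nat : forall x x' (f : hom x x'),
      comp _ _ _ (runit x') (tensm _ _ _ _ f (idm unit)) = comp _ _ _ f (runit x);
  pentagon : forall w x y z,
      comp _ _ _ (assoc w x (tens y z)) (assoc (tens w x) y z)
      = comp _ _ _ (tensm _ _ _ _ (idm w) (assoc x y z))
          (comp _ _ _ (assoc w (tens x y) z) (tensm _ _ _ _ (assoc w x y) (idm z)));
  triangle : forall x y,
      comp _ _ _ (tensm _ _ _ _ (idm x) (lunit y)) (assoc x unit y)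
      = tensm _ _ _ _ (runit x) (idm y)
}.

Arguments idm {_} x.
Arguments comp {_ x y z} g f.
Arguments tens {_} x y.
Arguments tensm {_ x x' y y'} f g.
Arguments unit {_}.
Arguments assoc {_} x y z.
Arguments lunit {_} x.
Arguments runit {_} x.

Definition is_inverse (M : MonCat) (x y : ob M) (f : hom M x y) (g : hom M y x) : Prop :=
  comp g f = idm x /\ comp f g = idm y.

Definition is_iso (M : MonCat) (x y : ob M) (f : hom M x y) : Prop :=
  exists g, is_inverse M x y f g.

Definition isomorphic (M : MonCat) (x y : ob M) : Prop :=
  exists f : hom M x y, is_iso M x y f.

Definition all_invertible (M : MonCat) : Prop :=
  forall x y (f : hom M x y), is_iso M x y f.

Record W2G := {
  w2g_mon : MonCat;
  w2g_inv : all_invertible w2g_mon;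
  w2g_weak_inverse : forall x : ob w2g_mon, exists y : ob w2g_mon,
      isomorphic w2g_mon (tens x y) unit /\ isomorphic w2g_mon (tens y x) unit
}.

(** * Adjoint equivalences (x, xbar, i_x, e_x)
    Zig-zag identities, literally as in the paper, where r^{-1}, l^{-1}, a^{-1}
    denote the (unique) inverses:
      r_x^{-1} l_x = (1 (x) e_x) a_{x,xbar,x} (i_x (x) 1)
      l_xbar^{-1} r_xbar = (e_x (x) 1) a^{-1}_{xbar,x,xbar} (1 (x) i_x). *)
Definition adjoint_equivalence (M : MonCat) (x xbar : ob M)
    (i : hom M unit (tens x xbar)) (e : hom M (tens xbar x) unit) : Prop :=
  is_iso M _ _ i /\ is_iso M _ _ e /\
  (forall rinv : hom M x (tens x unit), is_inverse M _ _ (runit x) rinv ->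
     comp rinv (lunit x)
     = comp (tensm (idm x) e) (comp (assoc x xbar x) (tensm i (idm x)))) /\
  (forall (linv : hom M xbar (tens unit xbar))
          (ainv : hom M (tens xbar (tens x xbar)) (tens (tens xbar x) xbar)),
     is_inverse M _ _ (lunit xbar) linv ->
     is_inverse M _ _ (assoc xbar x xbar) ainv ->
     comp linv (runit xbar)
     = comp (tensm e (idm xbar)) (comp ainv (tensm (idm xbar) i))).

Record C2G := {
  c2g_mon : MonCat;
  c2g_inv : all_invertible c2g_mon;
  c2g_bar : ob c2g_mon -> ob c2g_mon;
  c2g_i : forall x, hom c2g_mon unit (tens x (c2g_bar x));
  c2g_e : forall x, hom c2g_mon (tens (c2g_bar x) x) unit;
  c2g_adj : forall x, adjoint_equivalence c2g_mon x (c2g_bar x) (c2g_i x) (c2g_e x)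
}.

Record MonFunctor (M N : MonCat) := {
  fob : ob M -> ob N;
  fmor : forall x y, hom M x y -> hom N (fob x) (fob y);
  fmor_id : forall x, fmor _ _ (idm x) = idm (fob x);
  fmor_comp : forall x y z (g : hom M y z) (f : hom M x y),
      fmor _ _ (comp g f) = comp (fmor _ _ g) (fmor _ _ f);
  fmu : forall x y, hom N (tens (fob x) (fob y)) (fob (tens x y));
  feta : hom N unit (fob unit);
  fmu_iso : forall x y, is_iso N _ _ (fmu x y);
  feta_iso : is_iso N _ _ feta;
  fmu_nat : forall x x' y y' (f : hom M x x') (g : hom M y y'),
      comp (fmu x' y') (tensm (fmor _ _ f) (fmor _ _ g))
      = comp (fmor _ _ (tensm f g)) (fmu x y);
  fassoc : forall x y z,
      comp (fmor _ _ (assoc x y z)) (comp (fmu (tens x y) z) (tensm (fmu x y) (idm (fob z))))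
      = comp (fmu x (tens y z))
          (comp (tensm (idm (fob x)) (fmu y z)) (assoc (fob x) (fob y) (fob z)));
  flunit : forall x,
      comp (fmor _ _ (lunit x)) (comp (fmu unit x) (tensm feta (idm (fob x))))
      = lunit (fob x);
  frunit : forall x,
      comp (fmor _ _ (runit x)) (comp (fmu x unit) (tensm (idm (fob x)) feta))
      = runit (fob x)
}.

Arguments fob {M N} m x.
Arguments fmor {M N} m {x y} _.
Arguments fmu {M N} m x y.
Arguments feta {M N} m.

Record MonNat (M N : MonCat) (F G : MonFunctor M N) := {
  ncomp : forall x, hom N (fob F x) (fob G x);
  nnat : forall x y (f : hom M x y),
      comp (ncomp y) (fmor F f) = comp (fmor G f) (ncomp x);
  nmu : forall x y,
      comp (ncomp (tens x y)) (fmu F x y) = comp (fmu G x y) (tensm (ncomp x) (ncomp y));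
  neta : comp (ncomp unit) (feta F) = feta G
}.

(** Note that both depend only
    on the underlying weak monoidal categories (no compatibility with the chosen
    adjoint equivalences is required for C2G). *)
Definition W2G_mor (C D : W2G) := MonFunctor (w2g_mon C) (w2g_mon D).
Arguments ncomp {M N F G} m x.

Definition W2G_2mor (C D : W2G) (F G : W2G_mor C D) := @MonNat _ _ F G.
Definition C2G_mor (C D : C2G) := MonFunctor (c2g_mon C) (c2g_mon D).
Definition C2G_2mor (C D : C2G) (F G : C2G_mor C D) := @MonNat _ _ F G.

(* Main.v *)
Require Import Defs.
From Stdlib Require Import ClassicalEpsilon.

Lemma grp {M : MonCat} {a b c d : ob M} (g : hom M c d) (f : hom M b c) (t : hom M a b) :
  comp g (comp f t) = comp (comp g f) t.
Proof. apply comp_assoc. Qed.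

Lemma mono {M : MonCat} (Hinv : all_invertible M) {a b c : ob M} (f : hom M b c)
  (g1 g2 : hom M a b) : comp f g1 = comp f g2 -> g1 = g2.
Proof.
  intro E. destruct (Hinv _ _ f) as [h [H1 H2]].
  rewrite <- (comp_id_l M _ _ g1), <- (comp_id_l M _ _ g2), <- H1, <- !comp_assoc, E.
  reflexivity.
Qed.

Lemma epi {M : MonCat} (Hinv : all_invertible M) {a b c : ob M} (f : hom M a b)
  (g1 g2 : hom M b c) : comp g1 f = comp g2 f -> g1 = g2.
Proof.
  intro E. destruct (Hinv _ _ f) as [h [H1 H2]].
  rewrite <- (comp_id_r M _ _ g1), <- (comp_id_r M _ _ g2), <- H2, !comp_assoc, E.
  reflexivity.
Qed.

Lemma xchg1 {M : MonCat} {a a' b b' : ob M} (f : hom M a a') (g : hom M b b') :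
  comp (tensm f (idm b')) (tensm (idm a) g) = tensm f g.
Proof. rewrite <- tens_comp, comp_id_l, comp_id_r. reflexivity. Qed.

Lemma xchg2 {M : MonCat} {a a' b b' : ob M} (f : hom M a a') (g : hom M b b') :
  comp (tensm (idm a') g) (tensm f (idm b)) = tensm f g.
Proof. rewrite <- tens_comp, comp_id_l, comp_id_r. reflexivity. Qed.

Lemma tens_l {M : MonCat} {w a b c : ob M} (g : hom M b c) (f : hom M a b) :
  tensm (idm w) (comp g f) = comp (tensm (idm w) g) (tensm (idm w) f).
Proof. rewrite <- tens_comp, comp_id_l. reflexivity. Qed.

Lemma tens_r {M : MonCat} {w a b c : ob M} (g : hom M b c) (f : hom M a b) :
  tensm (comp g f) (idm w) = comp (tensm g (idm w)) (tensm f (idm w)).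
Proof. rewrite <- tens_comp, comp_id_l. reflexivity. Qed.

Lemma cancel_lu {M : MonCat} (Hinv : all_invertible M) {a b : ob M} (f g : hom M a b) :
  tensm (idm unit) f = tensm (idm unit) g -> f = g.
Proof.
  intro E. apply (epi Hinv (lunit a)). rewrite <- !lunit_nat, E. reflexivity.
Qed.

Lemma cancel_ru {M : MonCat} (Hinv : all_invertible M) {a b : ob M} (f g : hom M a b) :
  tensm f (idm unit) = tensm g (idm unit) -> f = g.
Proof.
  intro E. apply (epi Hinv (runit a)). rewrite <- !runit_nat, E. reflexivity.
Qed.

Lemma assoc_nat_l {M : MonCat} {x y z z' : ob M} (h : hom M z z') :
  comp (assoc x y z') (tensm (idm (tens x y)) h) = comp (tensm (idm x) (tensm (idm y) h)) (assoc x y z).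
Proof. rewrite <- tens_id. apply assoc_nat. Qed.

Lemma assoc_nat_m {M : MonCat} {x y y' z : ob M} (h : hom M y y') :
  comp (assoc x y' z) (tensm (tensm (idm x) h) (idm z)) = comp (tensm (idm x) (tensm h (idm z))) (assoc x y z).
Proof. apply assoc_nat. Qed.

Lemma assoc_nat_r {M : MonCat} {x x' y z : ob M} (h : hom M x x') :
  comp (assoc x' y z) (tensm (tensm h (idm y)) (idm z)) = comp (tensm h (idm (tens y z))) (assoc x y z).
Proof. rewrite <- tens_id. apply assoc_nat. Qed.

Lemma K1 {M : MonCat} (Hinv : all_invertible M) (x y : ob M) :
  comp (lunit (tens x y)) (assoc unit x y) = tensm (lunit x) (idm y).
Proof.
  apply (cancel_lu Hinv).
  apply (epi Hinv (comp (assoc unit (tens unit x) y) (tensm (assoc unit unit x) (idm y)))).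
  rewrite tens_l, <- comp_assoc, <- pentagon, grp, triangle, <- assoc_nat_r,
    <- triangle, tens_r, grp, assoc_nat_m, <- !comp_assoc.
  reflexivity.
Qed.

Lemma K2 {M : MonCat} (Hinv : all_invertible M) (x y : ob M) :
  comp (tensm (idm x) (runit y)) (assoc x y unit) = runit (tens x y).
Proof.
  apply (cancel_ru Hinv).
  apply (mono Hinv (assoc x y unit)).
  rewrite tens_r, grp, assoc_nat_m, <- (triangle M y unit), tens_l, <- !comp_assoc,
    <- pentagon, grp, <- assoc_nat_l, <- comp_assoc, triangle.
  reflexivity.
Qed.

Lemma K3 {M : MonCat} (Hinv : all_invertible M) : lunit (@unit M) = runit unit.
Proof.
  apply (cancel_ru Hinv).
  assert (E : tensm (idm unit) (lunit unit) = lunit (tens (@unit M) unit)).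
  { apply (mono Hinv (lunit unit)). apply lunit_nat. }
  rewrite <- K1 by exact Hinv. rewrite <- E. rewrite triangle. reflexivity.
Qed.

Lemma swapLR {M : MonCat} (Hinv : all_invertible M) (z : ob M) (e : hom M z unit) :
  comp (lunit z) (tensm e (idm z)) = comp (runit z) (tensm (idm z) e).
Proof.
  apply (mono Hinv e).
  rewrite !grp, <- lunit_nat, <- runit_nat, <- !comp_assoc, xchg2, xchg1, (K3 Hinv).
  reflexivity.
Qed.

Lemma faith_r {M : MonCat} (Hinv : all_invertible M) (x y : ob M) (i : hom M unit (tens x y))
  (a b : ob M) (f g : hom M a b) : tensm f (idm x) = tensm g (idm x) -> f = g.
Proof.
  intro E.
  assert (E1 : tensm f (idm (tens x y)) = tensm g (idm (tens x y))).
  { apply (epi Hinv (assoc a x y)). rewrite <- !assoc_nat_r, E. reflexivity. }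
  apply (cancel_ru Hinv).
  apply (mono Hinv (tensm (idm b) i)).
  rewrite (xchg2 f i), (xchg2 g i), <- (xchg1 f i), <- (xchg1 g i), E1. reflexivity.
Qed.

Lemma zig2 {M : MonCat} (Hinv : all_invertible M) (x y : ob M)
  (i : hom M unit (tens x y)) (e : hom M (tens y x) unit)
  (ainv : hom M (tens y (tens x y)) (tens (tens y x) y))
  (Ha : is_inverse M _ _ (assoc y x y) ainv)
  (H1 : comp (runit x) (comp (tensm (idm x) e) (comp (assoc x y x) (tensm i (idm x)))) = lunit x) :
  comp (lunit y) (comp (tensm e (idm y)) (comp ainv (tensm (idm y) i))) = runit y.
Proof.
  apply (faith_r Hinv x y i).
  assert (P' : comp (tensm (idm y) (assoc x y x)) (assoc y (tens x y) x)
             = comp (assoc y x (tens y x)) (comp (assoc (tens y x) y x) (tensm ainv (idm x)))).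
  { apply (epi Hinv (tensm (assoc y x y) (idm x))).
    rewrite <- comp_assoc, <- pentagon, <- !comp_assoc, <- tens_r, (proj1 Ha), tens_id, comp_id_r.
    reflexivity. }
  rewrite !tens_r, <- (K1 Hinv y x), <- comp_assoc, (grp (assoc unit y x)), assoc_nat_r, <- !comp_assoc, (grp (lunit _)),
    swapLR by exact Hinv.
  rewrite <- (triangle M y x), <- H1, !tens_l, <- !comp_assoc, <- assoc_nat_m, (grp (tensm (idm y) (assoc x y x))), P',
    <- !comp_assoc, (grp (tensm (idm y) (tensm (idm x) e))), <- assoc_nat_l, <- !comp_assoc, (grp (tensm (idm y) (runit x))), (K2 Hinv), <- ?comp_assoc.
  reflexivity.
Qed.

Lemma improve {M : MonCat} (Hinv : all_invertible M) (x y : ob M)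
  (i : hom M unit (tens x y)) (e0 : hom M (tens y x) unit) :
  exists e : hom M (tens y x) unit,
  comp (runit x) (comp (tensm (idm x) e) (comp (assoc x y x) (tensm i (idm x)))) = lunit x.
Proof.
  set (Z0 := comp (tensm (idm x) e0) (comp (assoc x y x) (tensm i (idm x)))).
  destruct (Hinv _ _ Z0) as [Z0inv [HZ1 HZ2]].
  destruct (Hinv _ _ (runit x)) as [rinv [Hr1 Hr2]].
  destruct (Hinv _ _ (lunit x)) as [linv [Hl1 Hl2]].
  set (k := comp Z0inv (comp rinv (lunit x))).
  set (h := comp (lunit x) (comp k linv)).
  assert (Ih : tensm (idm unit) h = k).
  { apply (mono Hinv (lunit x)). rewrite lunit_nat. unfold h.
    rewrite <- !comp_assoc, Hl1, comp_id_r. reflexivity. }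
  exists (comp e0 (tensm (idm y) h)).
  rewrite tens_l, <- comp_assoc, (grp (tensm (idm x) (tensm (idm y) h))), <- assoc_nat_l,
    <- comp_assoc, (xchg2 i h), <- (xchg1 i h), Ih.
  transitivity (comp (runit x) (comp Z0 k)).
  { unfold Z0. rewrite <- !comp_assoc. reflexivity. }
  unfold k. rewrite (grp Z0), HZ2, comp_id_l, grp, Hr2, comp_id_l. reflexivity.
Qed.

Lemma adj_exists {M : MonCat} (Hinv : all_invertible M) (x y : ob M)
  (i : hom M unit (tens x y)) (e0 : hom M (tens y x) unit) :
  exists e, adjoint_equivalence M x y i e.
Proof.
  destruct (improve Hinv x y i e0) as [e He].
  exists e. split; [apply Hinv|split; [apply Hinv|split]].
  - intros rinv [Hr1 Hr2]. rewrite <- He, grp, Hr1, comp_id_l. reflexivity.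
  - intros linv ainv [Hl1 Hl2] Ha.
    rewrite <- (zig2 Hinv x y i e ainv Ha He), grp, Hl1, comp_id_l. reflexivity.
Qed.

Lemma coh_data (C : W2G) (x : ob (w2g_mon C)) :
  exists t : {y : ob (w2g_mon C) & (hom (w2g_mon C) unit (tens x y) * hom (w2g_mon C) (tens y x) unit)%type},
    adjoint_equivalence (w2g_mon C) x (projT1 t) (fst (projT2 t)) (snd (projT2 t)).
Proof.
  pose proof (w2g_inv C) as Hinv.
  destruct (w2g_weak_inverse C x) as [y [[f _] [g _]]].
  destruct (Hinv _ _ f) as [fi _].
  destruct (adj_exists Hinv x y fi g) as [e He].
  exists (existT _ y (fi, e)). exact He.
Qed.

Definition Imp (C : W2G) : C2G :=
  let D := fun x => constructive_indefinite_description _ (coh_data C x) in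
  Build_C2G (w2g_mon C) (w2g_inv C)
    (fun x => projT1 (proj1_sig (D x)))
    (fun x => fst (projT2 (proj1_sig (D x))))
    (fun x => snd (projT2 (proj1_sig (D x))))
    (fun x => proj2_sig (D x)).

Theorem corollary5p3 :
  exists Imp : W2G -> C2G, forall C : W2G, c2g_mon (Imp C) = w2g_mon C.
Proof.
  exists Imp. intro C. reflexivity.
Qed.
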